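(* If $\mathcal{O}$ contains only upwards closed modalities, then $\mathcal{O}$ is decomposable if and only if for all sets $X,Y$, all relations $R\subseteq X\times Y$ and all $t\in TTX$, $r\in TTY$, $t\,\mathcal{O}(\mathcal{O}(R))\,r$ implies $\mu t\,\mathcal{O}(R)\,\mu r$.
   Context: $\Sigma$ is a signature of effect operations with arities $\alpha^n\to\alpha$, $\mathbf{N}\times\alpha^n\to\alpha$, $\alpha^{\mathbf{N}}\to\alpha$ or $\mathbf{N}\times\alpha^{\mathbf{N}}\to\alpha$. $TX$ is the set of possibly infinite labelled trees with leaves $\bot$ or elements of $X$ and internal nodes labelled by operations (or $\sigma_m$, $m\in\mathbb{N}$) with children according to arity; $t\le t'$ iff $t$ is obtained from $t'$ by replacing subtrees with $\bot$. $\mu:TTX\to TX$ replaces each leaf of a tree of trees by that tree. $\mathbf{1}=\{*\}$. A set $\mathcal{O}$ of modalities is given with $[\![o]\!]\subseteq T\mathbf{1}$; upwards closed means $[\![o]\!]$ upward closed under $\le$. $t[\in P]\in T\mathbf{1}$ replaces leaves in $P$ by $*$ and other $X$-leaves by $\bot$; $o(A)=\{t\in TX\mid t[\in A]\in[\![o]\!]\}$. $R[A]=\{y\mid\exists x\in A,\ xRy\}$; $\mathcal{O}$-relator: $t\,\mathcal{O}(R)\,t'$ iff $\forall A\subseteq X\ \forall o\in\mathcal{O}$, $t\in o(A)\Rightarrow t'\in o(R[A])$. $\mathcal{T}$ is the least class of formulas containing $o(\top),o(\bot)$ ($o\in\mathcal{O}$) closed under arbitrary $\bigvee,\bigwedge$,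 with $[\![o(\top)]\!]=o(\{*\})$, $[\![o(\bot)]\!]=o(\emptyset)$, unions/intersections; $t\trianglelefteq t'$ on $T\mathbf{1}$ iff $\forall\Phi\in\mathcal{T}$, $t\in[\![\Phi]\!]\Rightarrow t'\in[\![\Phi]\!]$; $r\preccurlyeq r'$ on $TT\mathbf{1}$ iff $\forall o\,\forall\Phi\in\mathcal{T}$, $r\in o([\![\Phi]\!])\Rightarrow r'\in o([\![\Phi]\!])$. $\mathcal{O}$ is decomposable if $r\preccurlyeq r'$ implies $\mu r\trianglelefteq\mu r'$. *)

(* Defs.v *)
From mathcomp Require Import ssreflect ssrfun ssrbool eqtype ssrnat seq.
From Stdlib Require Import ClassicalEpsilon.

Set Implicit Arguments.
Unset Strict Implicit.
Unset Printing Implicit Defensive.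

(* A signature: operations, whether they carry a natural-number parameter
   (arity N x alpha^k -> alpha), and the number of children:
   Some n = finitely many (alpha^n), None = countably many (alpha^N). *)
Record signature := Signature {
  sop : Type;
  sparam : sop -> bool;
  sarity : sop -> option nat
}.

Section Trees.
Variable S : signature.

(* Labels of tree positions: bottom, a return leaf, or an operation node
   (operation, parameter m; m is forced to 0 for unparameterised ops). *)
Inductive lab (A : Type) : Type :=
| Lbot : lab A
| Lret : A -> lab A
| Lop : sop S -> nat -> lab A.

Definition in_ar (o : sop S) (i : nat) : Prop :=
  match sarity o with Some n => (i < n)%N | None => True end.

(* A (possibly infinite) tree is given by its labelling of positions;
   positions are paths from the root, child i of p being rcons p i. *)
Definition raw (A : Type) := seq nat -> option (lab A).

Definition wf_tree (A : Type) (t : raw A) : Prop :=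
  t [::] <> None /\
  (forall p i, t (rcons p i) <> None <->
     exists o m, t p = Some (Lop A o m) /\ in_ar o i) /\
  (forall p o m, t p = Some (Lop A o m) -> sparam o = false -> m = 0%N).

Definition tree (A : Type) := { t : raw A | wf_tree t }.

(* t <= t' : t obtained from t' by replacing subtrees with bottom *)
Definition tle_bot (A : Type) (t t' : raw A) : Prop :=
  forall p l, t p = Some l -> t' p <> None /\ (l = Lbot A \/ t' p = Some l).

Fixpoint muf (A : Type) (r : raw (tree A)) (p q : seq nat) : option (lab A) :=
  match r p with
  | Some (Lret s) => proj1_sig s q
  | Some (Lbot) => if q is [::] then Some (Lbot A) else None
  | Some (Lop o m) =>
      match q with [::] => Some (Lop A o m) | i :: q' => muf r (rcons p i) q' end
  | None => None
  end.

Definition mu (A : Type) (r : raw (tree A)) : raw A := fun q => muf r [::] q.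

Definition restrict (A : Type) (P : A -> Prop) (t : raw A) : raw unit :=
  fun p => match t p with
           | None => None
           | Some (Lbot) => Some (Lbot unit)
           | Some (Lop o m) => Some (Lop unit o m)
           | Some (Lret x) =>
               if excluded_middle_informative (P x) then Some (Lret tt)
               else Some (Lbot unit)
           end.

Variable M : Type.
Variable sem : M -> raw unit -> Prop.

Definition modset (A : Type) (o : M) (P : A -> Prop) (t : raw A) : Prop :=
  sem o (restrict P t).

Definition rimage (X Y : Type) (R : X -> Y -> Prop) (P : X -> Prop) : Y -> Prop :=
  fun y => exists x, P x /\ R x y.

Definition relator (X Y : Type) (R : X -> Y -> Prop) (t : raw X) (t' : raw Y) : Prop :=
  forall (P : X -> Prop) (o : M), modset o P t -> modset o (rimage R P) t'.

Definition upclosed (U : raw unit -> Prop) : Prop :=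
  forall t t' : tree unit, tle_bot (proj1_sig t) (proj1_sig t') ->
    U (proj1_sig t) -> U (proj1_sig t').

Inductive form : Type :=
| Ftop : M -> form
| Fbot : M -> form
| For : forall I : Type, (I -> form) -> form
| Fand : forall I : Type, (I -> form) -> form.

Fixpoint den (F : form) : raw unit -> Prop :=
  match F with
  | Ftop o => modset o (fun _ => True)
  | Fbot o => modset o (fun _ => False)
  | For J f => fun t => exists i, den (f i) t
  | Fand J f => fun t => forall i, den (f i) t
  end.

(* t ⊴ t' on T1 *)
Definition flt (t t' : raw unit) : Prop := forall F, den F t -> den F t'.

(* r ≼ r' on TT1 *)
Definition fprec (r r' : raw (tree unit)) : Prop :=
  forall (o : M) (F : form),
    modset o (fun s : tree unit => den F (proj1_sig s)) r ->
    modset o (fun s : tree unit => den F (proj1_sig s)) r'.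

Definition decomposable : Prop :=
  forall r r' : tree (tree unit),
    fprec (proj1_sig r) (proj1_sig r') ->
    flt (mu (proj1_sig r)) (mu (proj1_sig r')).

End Trees.

(* Main.v *)
Require Import Defs.
From mathcomp Require Import ssreflect ssrfun ssrbool eqtype ssrnat seq.
From Stdlib Require Import ClassicalEpsilon FunctionalExtensionality.

Set Implicit Arguments.
Unset Strict Implicit.
Section P.
Variable S : signature.

Definition lmapL (A B : Type) (h : A -> lab S B) (l : lab S A) : lab S B :=
  match l with
  | Lbot => Lbot S B
  | Lret x => h x
  | Lop o m => Lop B o m
  end.

Definition rmap (A B : Type) (h : A -> lab S B) (t : raw S A) : raw S B :=
  fun p => option_map (lmapL h) (t p).

Lemma rmap_None A B (h : A -> lab S B) t p : rmap h t p = None <-> t p = None.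
Proof. rewrite /rmap; case: (t p) => //=; split => //. Qed.

Lemma rmap_Lop A B (h : A -> lab S B) (Hh : forall x o m, h x <> Lop B o m) t p o m :
  rmap h t p = Some (Lop B o m) <-> t p = Some (Lop A o m).
Proof.
rewrite /rmap; case: (t p) => [l|] /=; last by split.
case: l => [|x|o' m'] /=; split => //.
- move=> [] E; by case: (Hh x o m).
- by case=> -> ->.
- by case=> -> ->.
Qed.

Lemma wf_rmap A B (h : A -> lab S B) (Hh : forall x o m, h x <> Lop B o m) (t : raw S A) :
  wf_tree t -> wf_tree (rmap h t).
Proof.
move=> [H1 [H2 H3]]; split; [|split].
- by move/rmap_None.
- move=> p i; split.
  + move=> E; have E' : t (rcons p i) <> None by move=> E2; apply: E; exact: (proj2 (rmap_None _ _ _) E2).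
    have [o [m [Hp Hi]]] := proj1 (H2 p i) E'.
    exists o, m; split => //; exact/(rmap_Lop Hh).
  + move=> [o [m [Hp Hi]]] E.
    have Hx : exists o m, t p = Some (Lop A o m) /\ in_ar o i by exists o, m; split => //; exact/(rmap_Lop Hh).
    apply: (proj2 (H2 p i) Hx); exact: (proj1 (rmap_None _ _ _) E).
- move=> p o m Hp; apply: H3; exact: (proj1 (rmap_Lop Hh _ _ _ _) Hp).
Qed.

Definition hR (A : Type) (P : A -> Prop) (x : A) : lab S unit :=
  if excluded_middle_informative (P x) then Lret S tt else Lbot S unit.

Lemma hR_ok A (P : A -> Prop) x o m : hR P x <> Lop unit o m.
Proof. by rewrite /hR; case: excluded_middle_informative. Qed.

Lemma restrict_rmap A (P : A -> Prop) t : restrict P t = rmap (hR P) t.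
Proof.
apply: functional_extensionality => p; rewrite /restrict /rmap /hR.
case: (t p) => [[|x|o m]|] //=; by case: excluded_middle_informative.
Qed.

Definition restrictT A (P : A -> Prop) (t : tree S A) : tree S unit :=
  exist _ (restrict P (proj1_sig t))
   (eq_ind_r (@wf_tree S unit) (wf_rmap (@hR_ok A P) (proj2_sig t)) (restrict_rmap P (proj1_sig t))).

Lemma restrict_ext A (P Q : A -> Prop) (t : raw S A) : (forall x, P x <-> Q x) -> restrict P t = restrict Q t.
Proof.
move=> H; apply: functional_extensionality => p; rewrite /restrict.
case: (t p) => [[|x|o m]|] //.
case: excluded_middle_informative => Px; case: excluded_middle_informative => Qx //.
- by case: Qx; apply/H.
- by case: Px; apply/H.
Qed.

Lemma restrict_True (u : raw S unit) : restrict (fun _ => True) u = u.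
Proof.
apply: functional_extensionality => p; rewrite /restrict.
case: (u p) => [[|[]|o m]|] //.
by case: excluded_middle_informative.
Qed.

Lemma restrict_restrict A (P : A -> Prop) (Q : unit -> Prop) (t : raw S A) :
  restrict Q (restrict P t) = restrict (fun x => P x /\ Q tt) t.
Proof.
apply: functional_extensionality => p; rewrite /restrict.
case: (t p) => [[|x|o m]|] //.
case: (excluded_middle_informative (P x)) => Px /=;
 case: (excluded_middle_informative (Q tt)) => Qx /=;
 case: (excluded_middle_informative (P x /\ Q tt)) => PQx //=; exfalso; tauto.
Qed.

Lemma tle_restrict A (P Q : A -> Prop) (t : raw S A) : (forall x, P x -> Q x) ->
  tle_bot (restrict P t) (restrict Q t).
Proof.
move=> H p l; rewrite /restrict.
case: (t p) => [[|x|o m]|] //=.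
- by case=> <-; split => //; left.
- case: excluded_middle_informative => Px [] <-.
  + case: excluded_middle_informative => Qx; [split => //; by right|].
    by case: Qx; apply: H.
  + by split; [case: excluded_middle_informative|left].
- by case=> <-; split => //; right.
Qed.

Variable M : Type.
Variable sem : M -> raw S unit -> Prop.
Hypothesis up : forall o, upclosed (sem o).

Lemma modset_mono A (P Q : A -> Prop) (t : tree S A) o : (forall x, P x -> Q x) ->
  modset sem o P (proj1_sig t) -> modset sem o Q (proj1_sig t).
Proof.
move=> H; rewrite /modset.
have T1 := @tle_restrict A P Q (proj1_sig t) H.
exact: (@up o (restrictT P t) (restrictT Q t) T1).
Qed.


Lemma relator_flt X Y (R : X -> Y -> Prop) (s : raw S X) (s' : raw S Y) (P : X -> Prop) :
  relator sem R s s' -> flt sem (restrict P s) (restrict (rimage R P) s').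
Proof.
move=> HR F; elim: F.
- move=> o /=; rewrite /modset !restrict_True; exact: HR.
- move=> o /=; rewrite /modset !restrict_restrict.
  rewrite (@restrict_ext _ (fun x => P x /\ False) (fun _ => False)); last by move=> x; tauto.
  rewrite (@restrict_ext _ (fun x => rimage R P x /\ False) (rimage R (fun _ => False))); last first.
    move=> x; split; [tauto| by case=> y []].
  exact: HR.
- by move=> I f IH /= [i Hi]; exists i; apply: IH.
- by move=> I f IH /= Hi i; apply: IH.
Qed.

Lemma relator_eq_flt (u u' : raw S unit) : relator sem (@eq unit) u u' -> flt sem u u'.
Proof.
move=> H F; have := @relator_flt _ _ _ u u' (fun _ => True) H F.
rewrite restrict_True (@restrict_ext _ _ (fun _ => True)) ?restrict_True //.
by move=> x; split => // _; exists x.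
Qed.

Definition mapraw X (P : X -> Prop) (t : raw S (tree S X)) : raw S (tree S unit) :=
  rmap (fun s => Lret S (restrictT P s)) t.

Lemma mapok X (P : X -> Prop) x o m : (fun s => Lret S (restrictT P s)) x <> Lop (tree S unit) o m.
Proof. by []. Qed.

Definition mapT X (P : X -> Prop) (t : tree S (tree S X)) : tree S (tree S unit) :=
  exist _ (mapraw P (proj1_sig t)) (wf_rmap (@mapok X P) (proj2_sig t)).

Lemma muf_map X (P : X -> Prop) (t : raw S (tree S X)) q : forall p,
  muf (mapraw P t) p q = restrict P (muf t p) q.
Proof.
elim: q => [|i q IH] p.
- rewrite /= /mapraw /rmap /restrict /=; case: (t p) => [[|s|o m]|] //=.
- rewrite /= /mapraw /rmap /=; case E: (t p) => [[|s|o m]|] //=.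
  + rewrite /restrict /= E //.
  + rewrite /restrict /= E //.
  + rewrite IH /restrict /= E //.
  + rewrite /restrict /= E //.
Qed.

Lemma mu_map X (P : X -> Prop) (t : raw S (tree S X)) : mu (mapraw P t) = restrict P (mu t).
Proof. apply: functional_extensionality => q; exact: muf_map. Qed.

Lemma modset_mapraw X (P : X -> Prop) (Q : tree S unit -> Prop) o t :
  modset sem o Q (mapraw P t) = modset sem o (fun s => Q (restrictT P s)) t.
Proof.
rewrite /modset; congr (sem o _); apply: functional_extensionality => p.
rewrite /restrict /mapraw /rmap; by case: (t p) => [[|s|o' m]|].
Qed.

Lemma dir1 : decomposable sem -> forall (X Y : Type) (R : X -> Y -> Prop) (t : tree S (tree S X)) (r : tree S (tree S Y)),
     relator sem (fun (a : tree S X) (b : tree S Y) =>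
                    relator sem R (proj1_sig a) (proj1_sig b))
             (proj1_sig t) (proj1_sig r) ->
     relator sem R (mu (proj1_sig t)) (mu (proj1_sig r)).
Proof.
move=> D X Y R t r Hrel P o Hmu.
have Hf : fprec sem (proj1_sig (mapT P t)) (proj1_sig (mapT (rimage R P) r)).
  move=> o' F /=; rewrite !modset_mapraw => H1.
  have H2 := Hrel _ o' H1.
  move: H2; apply: modset_mono => s' [s [Hs Rss']].
  exact: (relator_flt (P:=P) Rss' Hs).
have Hflt := D (mapT P t) (mapT (rimage R P) r) Hf (Ftop o).
move: Hflt => /=; rewrite /modset !restrict_True !mu_map; apply.
exact: Hmu.
Qed.

Definition atom (o : M) (b : bool) : form M := if b then Ftop o else Fbot o.
Definition ftrue : form M := Fand (fun e : Empty_set => match e with end).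
Definition atomF (u : raw S unit) (ob : M * bool) : form M :=
  if excluded_middle_informative (den sem (atom ob.1 ob.2) u) then atom ob.1 ob.2 else ftrue.

Lemma dir2 : (forall (X Y : Type) (R : X -> Y -> Prop) (t : tree S (tree S X)) (r : tree S (tree S Y)),
     relator sem (fun (a : tree S X) (b : tree S Y) =>
                    relator sem R (proj1_sig a) (proj1_sig b))
             (proj1_sig t) (proj1_sig r) ->
     relator sem R (mu (proj1_sig t)) (mu (proj1_sig r))) -> decomposable sem.
Proof.
move=> H r r' Hpre; apply: relator_eq_flt; apply: (H unit unit eq r r') => P o HP.
pose F := For (fun s : {s : tree S unit | P s} => Fand (fun ob : M * bool => atomF (proj1_sig (proj1_sig s)) ob)).
have HF : modset sem o (fun s => den sem F (proj1_sig s)) (proj1_sig r).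
  move: HP; apply: modset_mono => s Ps.
  exists (exist _ s Ps) => /= ob; rewrite /atomF.
  case: excluded_middle_informative => //= _; by case.
have := Hpre o F HF; apply: modset_mono => s' [[s Ps] /= Hall].
exists s; split => // P' o' Hm.
case: (excluded_middle_informative (P' tt)) => HP'.
- have E1 : restrict P' (sval s) = restrict (fun _ => True) (sval s).
    by apply: restrict_ext => -[]; split.
  have Hs : den sem (atom o' true) (sval s) by rewrite /= /modset -E1; exact: Hm.
  have := Hall (o', true); rewrite /atomF; case: excluded_middle_informative => //= _ Hs'.
  rewrite /modset (@restrict_ext _ _ (fun _ => True)); first exact: Hs'.
  by move=> -[]; split => // _; exists tt.
- have E1 : restrict P' (sval s) = restrict (fun _ => False) (sval s).
    by apply: restrict_ext => -[]; split.
  have Hs : den sem (atom o' false) (sval s) by rewrite /= /modset -E1; exact: Hm.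
  have := Hall (o', false); rewrite /atomF; case: excluded_middle_informative => //= _ Hs'.
  rewrite /modset (@restrict_ext _ _ (fun _ => False)); first exact: Hs'.
  by move=> -[]; split => // -[[] [] ].
Qed.

End P.

Theorem corollary5p10 (S : signature) (M : Type) (sem : M -> raw S unit -> Prop) :
  (forall o : M, upclosed (sem o)) ->
  (decomposable sem <->
   forall (X Y : Type) (R : X -> Y -> Prop) (t : tree S (tree S X)) (r : tree S (tree S Y)),
     relator sem (fun (a : tree S X) (b : tree S Y) =>
                    relator sem R (proj1_sig a) (proj1_sig b))
             (proj1_sig t) (proj1_sig r) ->
     relator sem R (mu (proj1_sig t)) (mu (proj1_sig r))).
Proof.
move=> up; split; [exact: dir1 | exact: dir2].
Qed.
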